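(* Let $\{\mathcal B^{(n)}\}_{n\in\mathbb N}$ be a sequence of infinite matrices $\mathcal B^{(n)}=(\mathcal B^{(n)}_{r,s})_{r,s\ge0}$ and let $b\in\mathbb N$ be such that $\mathcal B^{(n)}_{rs}=0$ whenever $|r-s|>b$, for all $n$. Let $\mathcal B^R$ be a right limit of $\{\mathcal B^{(n)}\}$ along a subsequence $\{n_j\}_j$, and let $M\in\mathbb N$. Then $$\lim_{j\to\infty}C_m^{(n_j)}(\mathcal B^{(n_j)})=D_m(\mathcal B^R_{bM})\quad\text{for }m=1,\dots,M.$$
   Context: $\mathcal B^R=(\mathcal B^R_{r,s})_{r,s\in\mathbb Z}$ is a right limit along $\{n_j\}$ if $\mathcal B^R_{r,s}=\lim_j\mathcal B^{(n_j)}_{n_j+r,n_j+s}$ for all $r,s\in\mathbb Z$ and $\mathcal B^R$ is bounded on $\ell^2(\mathbb Z)$. $\mathcal B^R_{N}$ is the truncation equal to $\mathcal B^R_{r,s}$ for $r,s\in\{-N,\dots,N\}$ and $0$ otherwise. $P_n$ is the projection onto the coordinates $0,\dots,n-1$; $P_-$ on $\ell^2(\mathbb Z)$ is the projection onto coordinates $r<0$. For $m\ge1$, $$C_m^{(n)}(\mathcal B)=\sum_{j=2}^m\frac{(-1)^j}{j}\sum_{\substack{l_1+\dots+l_j=m\\ l_i\ge1}}\frac{\operatorname{Tr}\mathcal B^{l_1}P_n\cdots\mathcal B^{l_j}P_n-\operatorname{Tr}\mathcal B^mP_n}{l_1!\cdots l_j!}$$ (zero for $m=1$), and for a finite-rank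 operator $F$ on $\ell^2(\mathbb Z)$, $$D_m(F)=\sum_{j=1}^m\frac{(-1)^j}{j}\sum_{\substack{l_1+\dots+l_j=m\\ l_i\ge1}}\frac{\operatorname{Tr}\big(\prod_{t=1}^jP_-F^{l_t}P_--P_-F^mP_-\big)}{l_1!\cdots l_j!}.$$ *)

(* Defs.v *)
From HB Require Import structures.
From mathcomp Require Import all_boot all_order all_algebra.
From mathcomp Require Import complex.
From mathcomp Require Import reals.
Set Implicit Arguments. Unset Strict Implicit. Unset Printing Implicit Defensive.
Import Order.TTheory GRing.Theory Num.Theory.
Local Open Scope ring_scope.

Section Defs.
Variable R : realType.
Local Notation C := R[i].

Definition cvgC (u : nat -> C) (l : C) : Prop :=
  forall e : C, 0 < e -> exists J : nat, forall j : nat, (J <= j)%N -> `|u j - l| < e.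

Definition banded (b : nat) (B : nat -> nat -> C) : Prop :=
  forall r s : nat, (b < r - s)%N || (b < s - r)%N -> B r s = 0.

(* entry (r,s) of the l-th power of a matrix B with bandwidth b:
   (B^(l+1))_{rs} = sum_{t >= 0} B_{rt} (B^l)_{ts}; since B_{rt} = 0 for t > r + b,
   the sum is over t < r + b + 1 (this is the literal infinite sum for banded B). *)
Fixpoint powB (b : nat) (B : nat -> nat -> C) (l : nat) (r s : nat) : C :=
  match l with
  | O => (r == s)%:R
  | l'.+1 => \sum_(t < r + b + 1) B r t * powB b B l' t s
  end.

(* Tr B^{l_1} P_n B^{l_2} P_n ... B^{l_j} P_n *)
Definition trBP (b n : nat) (B : nat -> nat -> C) (j : nat) (l : 'I_j -> nat) : C :=
  \sum_(k : {ffun 'I_j -> 'I_n})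
     \prod_(t < j) powB b B (l t) (k t) (k (ordS t)).

(* Tr B^m P_n *)
Definition trBmP (b n : nat) (B : nat -> nat -> C) (m : nat) : C :=
  \sum_(k < n) powB b B m k k.

Definition compo (j m : nat) (l : {ffun 'I_j -> 'I_m.+1}) : bool :=
  [forall t, (0 < l t)%N] && ((\sum_(t < j) (l t : nat))%N == m).

Definition factprod (j m : nat) (l : {ffun 'I_j -> 'I_m.+1}) : C :=
  (\prod_(t < j) (l t : nat)`!)%:R.

Definition Cmn (b : nat) (m n : nat) (B : nat -> nat -> C) : C :=
  \sum_(2 <= j < m.+1)
    ((-1) ^+ j / j%:R) *
    \sum_(l : {ffun 'I_j -> 'I_m.+1} | compo l)
       (trBP b n B (fun t => (l t : nat)) - trBmP b n B m) / factprod l.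

Definition extZ (B : nat -> nat -> C) (r s : int) : C :=
  if (0 <= r) && (0 <= s) then B `|r|%N `|s|%N else 0.

(* boundedness on l^2(Z) of an infinite matrix A = (A_{rs})_{r,s in Z}:
   ||A x|| <= K ||x|| for all finitely supported x *)
Definition boundedZ (A : int -> int -> C) : Prop :=
  exists K : C, forall (N N' : nat) (x : int -> C),
    \sum_(i < (2 * N').+1)
       `| \sum_(k < (2 * N).+1) A (i%:Z - N'%:Z) (k%:Z - N%:Z) * x (k%:Z - N%:Z) | ^+ 2
    <= K * \sum_(k < (2 * N).+1) `| x (k%:Z - N%:Z) | ^+ 2.

Definition right_limit (Bs : nat -> nat -> nat -> C) (nj : nat -> nat)
    (BR : int -> int -> C) : Prop :=
  (forall r s : int,
     cvgC (fun j => extZ (Bs (nj j)) ((nj j)%:Z + r) ((nj j)%:Z + s)) (BR r s))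
  /\ boundedZ BR.

(* the truncation B^R_N, viewed on its support {-N..N}^2:
   index i : 'I_(2N+1) stands for the integer i - N *)
Definition truncZ (BR : int -> int -> C) (N : nat) : 'M[C]_((2 * N).+1) :=
  \matrix_(i, k) BR (i%:Z - N%:Z) (k%:Z - N%:Z).

(* P_- : projection onto coordinates r < 0, i.e. i < N *)
Definition Pminus (N : nat) : 'M[C]_((2 * N).+1) :=
  \matrix_(i, k) ((i == k) && (i < N)%N)%:R.

Definition Dm (N m : nat) (F : 'M[C]_((2 * N).+1)) : C :=
  let P := Pminus N in
  \sum_(1 <= j < m.+1)
    ((-1) ^+ j / j%:R) *
    \sum_(l : {ffun 'I_j -> 'I_m.+1} | compo l)
       \tr ((\prod_(t < j) (P * F ^+ (l t : nat) * P)) - P * F ^+ m * P) / factprod l.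

End Defs.

(* Main.v *)
Require Import Defs.
From HB Require Import structures.
From mathcomp Require Import all_boot all_order all_algebra.
From mathcomp Require Import complex.
From mathcomp Require Import reals.
From mathcomp Require Import zify ring lra.
Import Order.TTheory GRing.Theory Num.Theory.
Local Open Scope ring_scope.
Set Warnings "-notation-overridden,-ambiguous-paths".
Set Implicit Arguments. Unset Strict Implicit. Unset Printing Implicit Defensive.
Ltac slia := repeat match goal with H : forall _, _ |- _ => clear H end; lia.
Section Cvg.
Variable K : numFieldType.

Definition cvgK (u : nat -> K) (l : K) : Prop :=
  forall e : K, 0 < e -> exists J : nat, forall j : nat, (J <= j)%N -> `|u j - l| < e.

Lemma cvgK_cst c : cvgK (fun _ => c) c.
Proof. by move=> e e0; exists 0%N => j _; rewrite subrr normr0. Qed.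

Lemma cvgK_add u v a c : cvgK u a -> cvgK v c -> cvgK (fun j => u j + v j) (a + c).
Proof.
move=> hu hv e e0.
have e20 : 0 < e / 2 by rewrite divr_gt0.
have [J1 H1] := hu _ e20; have [J2 H2] := hv _ e20.
exists (maxn J1 J2) => j hj.
have h1 := H1 j (leq_trans (leq_maxl _ _) hj).
have h2 := H2 j (leq_trans (leq_maxr _ _) hj).
have -> : u j + v j - (a + c) = (u j - a) + (v j - c) by ring.
apply: (le_lt_trans (ler_normD _ _)).
by rewrite [e](splitr e) ltrD.
Qed.

Lemma cvgK_opp u a : cvgK u a -> cvgK (fun j => - u j) (- a).
Proof.
move=> hu e e0; have [J H] := hu _ e0; exists J => j hj.
by rewrite -opprD normrN; apply: H.
Qed.

Lemma cvgK_sub u v a c : cvgK u a -> cvgK v c -> cvgK (fun j => u j - v j) (a - c).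
Proof. by move=> hu hv; apply: cvgK_add => //; apply: cvgK_opp. Qed.

Lemma cvgK_mul u v a c : cvgK u a -> cvgK v c -> cvgK (fun j => u j * v j) (a * c).
Proof.
move=> hu hv e e0.
have ca0 : 0 < `|c| + 1 by rewrite ltr_wpDl.
have aa0 : 0 < `|a| + 1 by rewrite ltr_wpDl.
have e1 : 0 < e / 2 / (`|c| + 1) by rewrite !divr_gt0.
have e2 : 0 < e / 2 / (`|a| + 1) by rewrite !divr_gt0.
have [J1 H1] := hu _ e1; have [J2 H2] := hv _ e2; have [J3 H3] := hv _ ltr01.
exists (maxn J1 (maxn J2 J3)) => j hj.
have h1 := H1 j (leq_trans (leq_maxl _ _) hj).
have h2 := H2 j (leq_trans (leq_maxl _ _) (leq_trans (leq_maxr _ _) hj)).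
have h3 := H3 j (leq_trans (leq_maxr _ _) (leq_trans (leq_maxr _ _) hj)).
have -> : u j * v j - a * c = (u j - a) * v j + a * (v j - c) by ring.
apply: (le_lt_trans (ler_normD _ _)).
rewrite [e](splitr e) !normrM.
have hv1 : `|v j| <= `|c| + 1.
  have -> : v j = (v j - c) + c by ring.
  by apply: (le_trans (ler_normD _ _)); rewrite addrC lerD2l ltW.
apply: ltr_leD.
  apply: (le_lt_trans (y := `|u j - a| * (`|c| + 1))).
    by apply: ler_wpM2l => //.
  by rewrite -ltr_pdivlMr.
apply: (le_trans (y := (`|a| + 1) * `|v j - c|)).
  by apply: ler_wpM2r => //; rewrite lerDl.
rewrite mulrC -ler_pdivlMr //; exact: ltW.
Qed.

Lemma cvgK_ext u v a : (forall j, u j = v j) -> cvgK u a -> cvgK v a.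
Proof. by move=> huv hu e e0; have [J H] := hu _ e0; exists J => j hj; rewrite -huv; apply: H. Qed.

Lemma cvgK_sum (I : Type) (r : seq I) (P : pred I) (F : nat -> I -> K) (L : I -> K) :
  (forall i, P i -> cvgK (fun j => F j i) (L i)) ->
  cvgK (fun j => \sum_(i <- r | P i) F j i) (\sum_(i <- r | P i) L i).
Proof.
move=> h; elim: r => [|x r IH].
  rewrite big_nil; apply: (@cvgK_ext (fun _ => 0) _ _); last exact: cvgK_cst.
  by move=> j; rewrite big_nil.
rewrite big_cons; case: (boolP (P x)) => Px.
  apply: (@cvgK_ext (fun j => F j x + \sum_(i <- r | P i) F j i) _ _).
    by move=> j; rewrite big_cons Px.
  exact: cvgK_add (h _ Px) IH.
apply: (@cvgK_ext (fun j => \sum_(i <- r | P i) F j i) _ _) => //.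
by move=> j; rewrite big_cons (negbTE Px).
Qed.

Lemma cvgK_eventually u v a J0 : cvgK u a -> (forall j, (J0 <= j)%N -> u j = v j) -> cvgK v a.
Proof.
move=> hu huv e e0; have [J H] := hu _ e0; exists (maxn J J0) => j hj.
rewrite -huv; last exact: leq_trans (leq_maxr _ _) hj.
exact: H (leq_trans (leq_maxl _ _) hj).
Qed.

End Cvg.
Arguments cvgK_ext {K} u v a.
Section CvgM.
Variable K : numFieldType.

Definition cvgM m n (A : nat -> 'M[K]_(m, n)) (A0 : 'M[K]_(m, n)) : Prop :=
  forall i k, cvgK (fun j => A j i k) (A0 i k).

Lemma cvgM_cst m n (A : 'M[K]_(m, n)) : cvgM (fun _ => A) A.
Proof. by move=> i k; apply: cvgK_cst. Qed.

Lemma cvgM_add m n (A : nat -> 'M[K]_(m, n)) B A0 B0 :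
  cvgM A A0 -> cvgM B B0 -> cvgM (fun j => A j + B j) (A0 + B0).
Proof.
move=> hA hB i k; rewrite mxE.
apply: (cvgK_ext (fun j => A j i k + B j i k) _ _); first by move=> j; rewrite mxE.
exact: cvgK_add.
Qed.

Lemma cvgM_sub m n (A : nat -> 'M[K]_(m, n)) B A0 B0 :
  cvgM A A0 -> cvgM B B0 -> cvgM (fun j => A j - B j) (A0 - B0).
Proof.
move=> hA hB i k; rewrite !mxE.
apply: (cvgK_ext (fun j => A j i k - B j i k) _ _); first by move=> j; rewrite !mxE.
exact: cvgK_sub.
Qed.

Lemma cvgM_mul m n p (A : nat -> 'M[K]_(m, n)) (B : nat -> 'M[K]_(n, p)) A0 B0 :
  cvgM A A0 -> cvgM B B0 -> cvgM (fun j => A j *m B j) (A0 *m B0).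
Proof.
move=> hA hB i k; rewrite mxE.
apply: (cvgK_ext (fun j => \sum_z A j i z * B j z k) _ _); first by move=> j; rewrite mxE.
by apply: cvgK_sum => z _; apply: cvgK_mul.
Qed.

Lemma cvgM_mulr n (A : nat -> 'M[K]_n.+1) B A0 B0 :
  cvgM A A0 -> cvgM B B0 -> cvgM (fun j => A j * B j) (A0 * B0).
Proof. exact: cvgM_mul. Qed.

Lemma cvgM_prod n (I : Type) (r : seq I) (P : pred I) (F : nat -> I -> 'M[K]_n.+1) L :
  (forall i, P i -> cvgM (fun j => F j i) (L i)) ->
  cvgM (fun j => \prod_(i <- r | P i) F j i) (\prod_(i <- r | P i) L i).
Proof.
move=> h; elim: r => [|x r IH].
  move=> a c; rewrite big_nil; apply: (cvgK_ext (fun _ => (1 : 'M[K]_n.+1) a c) _ _); last exact: cvgK_cst.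
  by move=> j; rewrite big_nil.
move=> a c; rewrite big_cons; case: (boolP (P x)) => Px.
  apply: (cvgK_ext (fun j => (F j x * \prod_(i <- r | P i) F j i) a c) _ _).
    by move=> j; rewrite big_cons Px.
  exact: cvgM_mulr (h _ Px) IH a c.
apply: (cvgK_ext (fun j => (\prod_(i <- r | P i) F j i) a c) _ _); last exact: IH.
by move=> j; rewrite big_cons (negbTE Px).
Qed.

Lemma cvgM_exp n (A : nat -> 'M[K]_n.+1) A0 e :
  cvgM A A0 -> cvgM (fun j => A j ^+ e) (A0 ^+ e).
Proof.
move=> hA; elim: e => [|e IH].
  move=> a c; rewrite expr0; apply: (cvgK_ext (fun _ => (1 : 'M[K]_n.+1) a c) _ _); last exact: cvgK_cst.
  by move=> j; rewrite expr0.
move=> a c; rewrite exprS.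
apply: (cvgK_ext (fun j => (A j * A j ^+ e) a c) _ _); first by move=> j; rewrite exprS.
exact: cvgM_mulr.
Qed.

Lemma cvgK_tr n (A : nat -> 'M[K]_n) A0 : cvgM A A0 -> cvgK (fun j => \tr (A j)) (\tr A0).
Proof.
move=> hA; rewrite /mxtrace.
by apply: cvgK_sum => i _; apply: hA.
Qed.

End CvgM.
Section TraceProd.
Variable T : comNzRingType.

Lemma delta_mulmx n p (a : 'I_n) (b : 'I_n) (Z : 'M[T]_(n, p)) :
  delta_mx a b *m Z = \matrix_(x, y) ((x == a)%:R * Z b y).
Proof.
apply/matrixP => x y; rewrite !mxE (bigD1 b) //= big1 ?addr0.
  by rewrite mxE eqxx andbT.
by move=> w wb; rewrite mxE (negbTE wb) andbF mul0r.
Qed.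

Lemma mulmx_delta n p (c : 'I_p) (Z : 'M[T]_(n, p)) :
  Z *m delta_mx c c = \matrix_(x, y) (Z x c * (y == c)%:R).
Proof.
apply/matrixP => x y; rewrite !mxE (bigD1 c) //= big1 ?addr0.
  by rewrite mxE eqxx.
by move=> w wc; rewrite mxE (negbTE wc) mulr0.
Qed.

Lemma dZd n (a b c : 'I_n) (Z : 'M[T]_n) :
  delta_mx a b *m Z *m delta_mx c c = Z b c *: delta_mx a c.
Proof.
rewrite delta_mulmx mulmx_delta; apply/matrixP => x y; rewrite !mxE.
by case: (x == a); case: (y == c); rewrite /= ?mulr0 ?mul0r ?mulr1 ?mul1r.
Qed.

Lemma prod_path K (Z : nat -> 'M[T]_K.+1) (kn : nat -> 'I_K.+1) J :
  (\prod_(t < J) (delta_mx (kn t) (kn t) * Z t)) * delta_mx (kn J) (kn J)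
  = (\prod_(t < J) Z t (kn t) (kn t.+1)) *: delta_mx (kn 0%N) (kn J).
Proof.
elim: J => [|J IH].
  by rewrite !big_ord0 mul1r scale1r.
rewrite !big_ord_recr /=.
have -> : (\prod_(i < J) (delta_mx (kn i) (kn i) * Z i)) * (delta_mx (kn J) (kn J) * Z J)
   * delta_mx (kn J.+1) (kn J.+1)
   = ((\prod_(i < J) (delta_mx (kn i) (kn i) * Z i)) * delta_mx (kn J) (kn J))
      * Z J * delta_mx (kn J.+1) (kn J.+1) by rewrite !mulrA.
rewrite IH -!mulmxE -scalemxAl -scalemxAl dZd scalerA.
by rewrite mulrC.
Qed.

Lemma tr_idem n (E A : 'M[T]_n.+1) : E * E = E -> \tr (E * A) = \tr (E * A * E).
Proof.
move=> hE; have -> : E * A * E = (E * A) *m E by [].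
by rewrite [in RHS]mxtrace_mulC mulmxE mulrA hE.
Qed.

Lemma tr_prod_cyc K j (Z : nat -> 'M[T]_K.+1) :
  \tr (\prod_(t < j.+1) Z t) =
  \sum_(k : {ffun 'I_j.+1 -> 'I_K.+1}) \prod_(t < j.+1) Z t (k t) (k (ordS t)).
Proof.
have eZ : forall t, Z t = \sum_(a : 'I_K.+1) delta_mx a a * Z t.
  move=> t; rewrite -mulr_suml -mx1_sum_delta.
  by rewrite mul1r.
transitivity (\tr (\prod_(t < j.+1) \sum_(a : 'I_K.+1) (delta_mx a a * Z t))).
  by congr (\tr _); apply: eq_bigr => t _; rewrite -eZ.
rewrite bigA_distr_bigA /= raddf_sum /=.
apply: eq_bigr => k _.
pose kn (i : nat) : 'I_K.+1 := k (inord (i %% j.+1)).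
have knE : forall t : 'I_j.+1, kn t = k t.
  by move=> t; rewrite /kn modn_small // inord_val.
have knS : forall t : 'I_j.+1, kn t.+1 = k (ordS t).
  move=> t; rewrite /kn; congr (k _); apply: val_inj; rewrite /= inordK //.
  by rewrite ltn_mod.
have knJ : kn j.+1 = kn 0%N by rewrite /kn modnn mod0n.
transitivity (\tr (\prod_(t < j.+1) (delta_mx (kn t) (kn t) * Z t))).
  by congr (\tr _); apply: eq_bigr => t _; rewrite knE.
have h := prod_path Z kn j.+1.
rewrite knJ in h.
transitivity (\tr ((\prod_(t < j.+1) (delta_mx (kn t) (kn t) * Z t)) * delta_mx (kn 0%N) (kn 0%N))).
  rewrite big_ord_recl /= -[(_ * Z _) * _]mulrA; apply: tr_idem.
  by rewrite -mulmxE mul_delta_mx.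
rewrite h mxtraceZ.
have -> : \tr (delta_mx (kn 0%N) (kn 0%N) : 'M[T]_K.+1) = 1.
  rewrite /mxtrace (bigD1 (kn 0%N)) //= mxE !eqxx big1 ?addr0 //.
  by move=> i hi; rewrite mxE (negbTE hi).
rewrite mulr1; apply: eq_bigr => t _.
by rewrite knE knS.
Qed.

End TraceProd.
Section Proj.
Variable T : comNzRingType.

Definition Pc K c : 'M[T]_K := \matrix_(i, k) ((i == k) && (i < c)%N)%:R.

Lemma Pc_mull K c p (A : 'M[T]_(K, p)) x y : (Pc K c *m A) x y = (x < c)%:R * A x y.
Proof.
rewrite !mxE (bigD1 x) //= big1 ?addr0; first by rewrite mxE eqxx.
by move=> w wx; rewrite mxE eq_sym (negbTE wx) mul0r.
Qed.

Lemma Pc_mulr K c p (A : 'M[T]_(p, K)) x y : (A *m Pc K c) x y = A x y * (y < c)%:R.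
Proof.
rewrite !mxE (bigD1 y) //= big1 ?addr0; first by rewrite mxE eqxx.
by move=> w wy; rewrite mxE (negbTE wy) mulr0.
Qed.

Lemma Pc_idem K c : (Pc K.+1 c) * (Pc K.+1 c) = Pc K.+1 c.
Proof.
apply/matrixP => x y; rewrite -mulmxE Pc_mull !mxE.
by case: (x == y); case: (x < c)%N; rewrite ?mulr1 ?mul1r ?mulr0 ?mul0r.
Qed.

Lemma PAP_E K c (B : 'M[T]_K.+1) x y :
  (Pc K.+1 c * B * Pc K.+1 c) x y = (x < c)%:R * B x y * (y < c)%:R.
Proof. by rewrite -!mulmxE Pc_mulr Pc_mull. Qed.

Lemma exp_sum K (A : 'M[T]_K.+1) J (f : 'I_J -> nat) :
  A ^+ (\sum_(t < J) f t) = \prod_(t < J) A ^+ f t.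
Proof.
elim: J f => [|J IH] f; first by rewrite !big_ord0 expr0.
by rewrite !big_ord_recr /= exprD IH.
Qed.

Definition Wt K j (A : 'M[T]_K) (l : 'I_j -> nat) (k : {ffun 'I_j -> 'I_K}) : T :=
  \prod_(t < j) (A ^+ l t) (k t) (k (ordS t)).

Lemma tr_PAP K c j (A : 'M[T]_K.+1) (l : 'I_j.+1 -> nat) :
  \tr (\prod_(t < j.+1) (Pc K.+1 c * A ^+ l t * Pc K.+1 c)) =
  \sum_(k : {ffun 'I_j.+1 -> 'I_K.+1}) [forall t, (k t < c)%N]%:R * Wt A l k.
Proof.
pose Z (i : nat) := Pc K.+1 c * A ^+ l (inord i) * Pc K.+1 c.
transitivity (\tr (\prod_(t < j.+1) Z t)).
  by congr (\tr _); apply: eq_bigr => t _; rewrite /Z inord_val.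
rewrite tr_prod_cyc; apply: eq_bigr => k _.
rewrite /Wt /Z.
case: (boolP [forall t, (k t < c)%N]) => hk.
  rewrite mul1r; apply: eq_bigr => t _.
  rewrite PAP_E inord_val (forallP hk t) (forallP hk (ordS t)) mulr1 mul1r //.
rewrite mul0r.
move: hk; rewrite negb_forall => /existsP [t ht].
by rewrite (bigD1 t) //= PAP_E (negbTE ht) !mul0r.
Qed.

Lemma tr_PA K c j (A : 'M[T]_K.+1) (l : 'I_j.+1 -> nat) m :
  m = (\sum_(t < j.+1) l t)%N ->
  \tr (Pc K.+1 c * A ^+ m * Pc K.+1 c) =
  \sum_(k : {ffun 'I_j.+1 -> 'I_K.+1}) (k ord0 < c)%:R * Wt A l k.
Proof.
move=> hm; rewrite -tr_idem; last exact: Pc_idem.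
have i0 : inord 0 = ord0 :> 'I_j.+1 by apply: val_inj; rewrite /= inordK.
rewrite hm exp_sum.
pose Z (i : nat) := if i == 0%N then Pc K.+1 c * A ^+ l (inord i) else A ^+ l (inord i).
transitivity (\tr (\prod_(t < j.+1) Z t)).
  congr (\tr _); rewrite big_ord_recl [in RHS]big_ord_recl /= mulrA; congr (_ * _).
    by rewrite /Z /= i0.
  apply: eq_bigr => t _; rewrite /Z /=; congr (A ^+ l _).
  by apply: val_inj; rewrite /= inordK // ltnS.
rewrite tr_prod_cyc; apply: eq_bigr => k _.
rewrite /Wt /Z big_ord_recl [in RHS]big_ord_recl /= mulrA; congr (_ * _).
  by rewrite -mulmxE Pc_mull i0.
apply: eq_bigr => t _; congr ((A ^+ l _) _ _).
by apply: val_inj; rewrite /= inordK // ltnS.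
Qed.

End Proj.
Section Band.
Variable T : comNzRingType.

Definition bandM K b (A : 'M[T]_K) :=
  forall x y : 'I_K, (b < x - y)%N || (b < y - x)%N -> A x y = 0.

Lemma sum_ord_nat K (f : 'I_K.+1 -> T) :
  \sum_(x : 'I_K.+1) f x = \sum_(0 <= x < K.+1) f (inord x).
Proof. by rewrite big_mkord; apply: eq_bigr => x _; rewrite inord_val. Qed.

Lemma sum_shift p n (f : nat -> T) :
  \sum_(p <= i < p + n) f i = \sum_(0 <= i < n) f (i + p)%N.
Proof. by rewrite -{1}(add0n p) big_addn addKn. Qed.

Lemma sum_shift' p n N (f : nat -> T) : N = (p + n)%N ->
  \sum_(p <= i < N) f i = \sum_(0 <= i < n) f (i + p)%N.
Proof. by move=> ->; apply: sum_shift. Qed.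

Lemma band_exp K b (A : 'M[T]_K.+1) l : bandM b A -> bandM (b * l) (A ^+ l).
Proof.
move=> hA; elim: l => [|l IH] x y hxy.
  rewrite expr0 mxE; case: (eqVneq x y) => [exy|]; last by [].
  by move: hxy; rewrite exy subnn.
rewrite exprSr -mulmxE mxE big1 // => z _.
case: (boolP ((b * l < x - z)%N || (b * l < z - x)%N)) => h1.
  by rewrite IH // mul0r.
case: (boolP ((b < z - y)%N || (b < y - z)%N)) => h2.
  by rewrite hA // mulr0.
exfalso; move: hxy h1 h2; rewrite mulnS.
case/orP => h /norP [h1 h1'] /norP [h2 h2']; lia.
Qed.

Lemma ord_inj_nat K (x y : nat) : (x <= K)%N -> (y <= K)%N ->
  ((inord x : 'I_K.+1) == inord y) = (x == y).
Proof.
move=> hx hy; apply/eqP/eqP => [h|->] //.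
by have := congr1 val h; rewrite /= !inordK.
Qed.

Lemma window K q p b (G : 'M[T]_K.+1) (F : 'M[T]_q.+1) :
  (p + q = K)%N -> bandM b G ->
  (forall a c : 'I_q.+1, F a c = G (inord (p + a)%N) (inord (p + c)%N)) ->
  forall l (a c : 'I_q.+1), (b * l <= c)%N ->
    (F ^+ l) a c = (G ^+ l) (inord (p + a)%N) (inord (p + c)%N).
Proof.
move=> hK hG hF; elim => [|l IH] a c hc; have ha := ltn_ord a; have hcc := ltn_ord c.
  rewrite !expr0 !mxE ord_inj_nat; try lia.
  by rewrite eqn_add2l.
rewrite !exprSr -!mulmxE !mxE [in RHS]sum_ord_nat [in LHS]sum_ord_nat.
rewrite [in RHS](big_cat_nat (n := p)) //=; last lia.
rewrite [X in _ = X + _]big1_seq; last first.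
  move=> w; rewrite mem_index_iota => /andP [_ hw].
  rewrite hG ?mulr0 //; rewrite !inordK; try lia.
rewrite add0r [in RHS](sum_shift' (p := p) (n := q.+1)); last lia.
rewrite big_nat_cond [in RHS]big_nat_cond.
apply: eq_bigr => z; rewrite andbT => /andP [_ hz].
rewrite (addnC z p).
case: (boolP ((b < z - c)%N || (b < c - z)%N)) => h2.
  have -> : F (inord z) c = 0 by rewrite hF inordK // hG // !inordK; lia.
  rewrite hG ?mulr0 // !inordK; lia.
rewrite IH; last by rewrite inordK //; move: h2 hc; rewrite negb_or mulnS; lia.
by rewrite hF inordK.
Qed.

End Band.
Lemma powB_G (R : realType) b (B : nat -> nat -> R[i]) K : banded b B ->
  forall l x y, (x + b * l <= K)%N -> (y <= K)%N ->
  ((\matrix_(u, v) B u v : 'M[R[i]]_K.+1) ^+ l) (inord x) (inord y) = powB b B l x y.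
Proof.
move=> hB; elim => [|l IH] x y hx hy.
  by rewrite expr0 mxE ord_inj_nat //=; slia.
move: hx; rewrite mulnS => hx.
rewrite exprS -mulmxE mxE sum_ord_nat /=.
rewrite -(big_mkord xpredT (fun t => B x t * powB b B l t y)) (big_cat_nat (n := (x + b + 1)%N)) //=; last slia.
rewrite [X in _ + X]big1_seq ?addr0; last first.
  move=> z; rewrite mem_index_iota => /andP [hz1 hz2].
  rewrite mxE !inordK; try slia.
  by rewrite hB ?mul0r //; slia.
rewrite big_nat_cond [in RHS]big_nat_cond; apply: eq_bigr => z; rewrite andbT => /andP [_ hz].
rewrite mxE !inordK; try slia.
by rewrite IH //; slia.
Qed.
Lemma reindex_shift (T : nzRingType) (I : finType) K q p (g : {ffun I -> 'I_K.+1} -> T) :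
  (p + q <= K)%N ->
  (forall k, g k != 0 -> forall t, (p <= k t)%N /\ (k t < p + q.+1)%N) ->
  \sum_k g k = \sum_(y : {ffun I -> 'I_q.+1}) g [ffun t => inord (p + y t)%N].
Proof.
move=> hK hg.
rewrite (bigID (fun k : {ffun I -> 'I_K.+1} => [forall t, (p <= k t)%N && (k t < p + q.+1)%N])) /=.
rewrite [X in _ + X]big1 ?addr0; last first.
  move=> k hk; apply/eqP; apply: contraR hk => hk.
  by apply/forallP => t; have [h1 h2] := hg k hk t; rewrite h1 h2.
rewrite (reindex_onto (fun y : {ffun I -> 'I_q.+1} => [ffun t => (inord (p + y t)%N : 'I_K.+1)])
   (fun k : {ffun I -> 'I_K.+1} => [ffun t => (inord (k t - p)%N : 'I_q.+1)])) /=; last first.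
  move=> k /forallP hk; apply/ffunP => t; rewrite !ffunE.
  have /andP [h1 h2] := hk t; have h3 := ltn_ord (k t).
  apply: val_inj; rewrite /= !inordK; slia.
apply: eq_bigl => y.
apply/andP; split.
  apply/forallP => t; have h := ltn_ord (y t); rewrite ffunE inordK; last slia.
  by apply/andP; split; slia.
apply/eqP/ffunP => t; rewrite !ffunE; apply: val_inj; have h := ltn_ord (y t).
by rewrite /= !inordK; try slia; rewrite inordK; slia.
Qed.
Lemma chain J (z w : 'I_J.+1 -> nat) :
  (forall t, (z t <= z (ordS t) + w t)%N /\ (z (ordS t) <= z t + w t)%N) ->
  forall u t, (z u + w t <= z (ordS t) + \sum_(s < J.+1) w s)%N.
Proof.
move=> hzw u t.
pose zn i := z (inord (i %% J.+1)).
pose wn i := w (inord i).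
pose S i := (\sum_(s < i) wn s)%N.
have hzn : forall t : 'I_J.+1, zn t = z t.
  by move=> t'; rewrite /zn modn_small // inord_val.
have hzS : forall i, (i < J.+1)%N -> zn i.+1 = z (ordS (inord i)).
  move=> i hi; rewrite /zn; congr (z _); apply: val_inj; rewrite /= !inordK //.
  by rewrite ltn_mod.
have hzj : zn J.+1 = zn 0%N by rewrite /zn modnn mod0n.
have hS : forall i, S i.+1 = (S i + wn i)%N by move=> i; rewrite /S big_ord_recr.
have hS0 : S 0%N = 0%N by rewrite /S big_ord0.
have hsum : (\sum_(s < J.+1) w s)%N = S J.+1.
  by rewrite /S; apply: eq_bigr => s _; rewrite /wn inord_val.
have step : forall i, (i < J.+1)%N -> (zn i <= zn i.+1 + wn i)%N /\ (zn i.+1 <= zn i + wn i)%N.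
  move=> i hi; rewrite hzS // /zn modn_small // /wn; exact: hzw.
have mono : forall s t, (s <= t)%N -> (S s <= S t)%N.
  move=> s t' hst; elim: t' hst => [|t' IH] hst; first by move: hst; rewrite leqn0 => /eqP ->.
  rewrite hS; case: (eqVneq s t'.+1) => [->|hne]; first by rewrite hS.
  have : (s <= t')%N by move: hst hne; slia.
  move=> /IH; slia.
have F1 : forall s t, (s <= t)%N -> (t <= J.+1)%N ->
    (zn s <= zn t + (S t - S s))%N /\ (zn t <= zn s + (S t - S s))%N.
  move=> s t'; elim: t' => [|t' IH] hst htj.
    by move: hst; rewrite leqn0 => /eqP ->; rewrite subnn !addn0.
  case: (eqVneq s t'.+1) => [->|hne]; first by rewrite subnn !addn0.
  have hst' : (s <= t')%N by move: hst hne; slia.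
  have [h1 h2] := IH hst' (ltnW htj).
  have [h3 h4] := step t' htj.
  have h5 := mono s t' hst'.
  have h6 := hS t'.
  move: h1 h2 h3 h4 h5 h6; clear; lia.
have hu := ltn_ord u; have ht := ltn_ord t.
rewrite -hzn (_ : z (ordS t) = zn t.+1); last by rewrite hzS // inord_val.
rewrite (_ : w t = wn t); last by rewrite /wn inord_val.
rewrite hsum.
case: (leqP t.+1 u) => htu.
  have [_ h1] := F1 _ _ htu (ltnW hu).
  have h2 := mono _ _ (ltnW hu).
  have h3 := hS t.
  have h4 := mono _ _ htu.
  move: h1 h2 h3 h4; clear; lia.
have [_ h1] := F1 0%N u (leq0n _) (ltnW hu).
have [_ h2] := F1 t.+1 J.+1 ht (leqnn _).
have h3 := mono u t (ltnSE htu).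
have h4 := hS t.
have h5 := mono t.+1 J.+1 ht.
move: h1 h2 h3 h4 h5; rewrite hzj hS0; clear; lia.
Qed.
Section Main.
Variable R : realType.
Local Notation C := R[i].

Definition Gm (B : nat -> nat -> C) K : 'M[C]_K.+1 := \matrix_(u, v) B u v.

Lemma term_le_sum J (l : 'I_J -> nat) t : (l t <= \sum_(s < J) l s)%N.
Proof. by rewrite (bigD1 t) //= leq_addr. Qed.

Lemma L_S1 b (B : nat -> nat -> C) K n' j (l : 'I_j.+1 -> nat) m :
  banded b B -> (\sum_(t < j.+1) l t)%N = m -> (n'.+1 + b * m <= K.+1)%N ->
  trBP b n'.+1 B l =
  \sum_(k : {ffun 'I_j.+1 -> 'I_K.+1}) [forall t, (k t < n'.+1)%N]%:R * Wt (Gm B K) l k.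
Proof.
move=> hB hm hK.
rewrite (reindex_shift (p := 0%N) (q := n')); last first.
- move=> k hk t; split => //.
  case: (boolP [forall t, (k t < n'.+1)%N]) hk => [/forallP h|]; last by rewrite mul0r eqxx.
  by move=> _; exact: h t.
- by move: hK; slia.
rewrite /trBP; apply: eq_bigr => y _.
rewrite (_ : [forall t, _] = true); last first.
  apply/forallP => t; rewrite ffunE add0n inordK //.
  by case: (y t) => yt hyt /=; move: hK; slia.
rewrite mul1r /Wt; apply: eq_bigr => t _; rewrite !ffunE !add0n /Gm.
symmetry; apply: (powB_G hB).
- have := term_le_sum l t; rewrite hm => h1.
  have h3 : (b * l t <= b * m)%N by rewrite leq_mul2l h1 orbT.
  by move: h3; case: (y t) => yt hyt /=; move: hK; slia.
- by case: (y (ordS t)) => yt hyt /=; move: hK; slia.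
Qed.

Lemma L_S2 b (B : nat -> nat -> C) K n m :
  banded b B -> (n + b * m <= K.+1)%N ->
  trBmP b n B m = \tr (Pc C K.+1 n * Gm B K ^+ m * Pc C K.+1 n).
Proof.
move=> hB hK.
rewrite /mxtrace sum_ord_nat (big_cat_nat (n := n)) //; last by move: hK; slia.
rewrite [X in _ = _ + X]big1_seq ?addr0; last first.
  move=> x; rewrite mem_index_iota => /andP [h1 h2].
  have hx : (x < n)%N = false by apply/negP => h; move: h h1; slia.
  rewrite PAP_E inordK; last by move: hK; slia.
  by rewrite hx (_ : false%:R = 0) // !mul0r.
rewrite /trBmP -(big_mkord xpredT (fun k => powB b B m k k)).
rewrite big_nat_cond [in RHS]big_nat_cond; apply: eq_bigr => x; rewrite andbT => /andP [_ hx].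
rewrite PAP_E inordK; last by move: hK; slia.
rewrite hx mulr1 mul1r /Gm; symmetry; apply: (powB_G hB); move: hK; slia.
Qed.

End Main.
Lemma A1 (x y w : nat) : ~~ ((w < x - y)%N || (w < y - x)%N) -> (x <= y + w)%N /\ (y <= x + w)%N.
Proof. move=> /norP [h1 h2]; split; lia. Qed.

Lemma A2 (zu zt w s n p N : nat) : (n <= zu)%N -> (zu + w <= zt + s)%N -> (s <= N)%N -> (p + N)%N = n -> (p <= zt)%N.
Proof. lia. Qed.

Lemma A3 (yu yt w s N : nat) : (yu + w <= yt + s)%N -> (N <= yu)%N -> (s <= N)%N -> (w <= yt)%N.
Proof. lia. Qed.

Lemma A4 (w a c p : nat) : (w < a - c)%N || (w < c - a)%N -> (w < (p + a) - (p + c))%N || (w < (p + c) - (p + a))%N.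
Proof. by rewrite !subnDl. Qed.

Lemma A5 (a p N n : nat) : (p + N)%N = n -> ((p + a) < n)%N = (a < N)%N.
Proof. by move=> <-; rewrite ltn_add2l. Qed.

Lemma A6 (x p q K : nat) : (x < K.+1)%N -> (p + q)%N = K -> (x < p + q.+1)%N.
Proof. lia. Qed.

Lemma A7 (x p q K : nat) : (x < q.+1)%N -> (p + q)%N = K -> (p + x < K.+1)%N.
Proof. lia. Qed.

Section Main2.
Variable R : realType.
Local Notation C := R[i].

Lemma band_G b (B : nat -> nat -> C) K : banded b B -> bandM b (Gm B K).
Proof. by move=> hB x y hxy; rewrite mxE hB. Qed.

Lemma Wt_zero K j (A : 'M[C]_K.+1) b (l : 'I_j.+1 -> nat) (k : {ffun 'I_j.+1 -> 'I_K.+1}) t :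
  bandM b A -> (b * l t < k t - k (ordS t))%N || (b * l t < k (ordS t) - k t)%N -> Wt A l k = 0.
Proof.
move=> hA ht; rewrite /Wt (bigD1 t) //= (band_exp hA) ?mul0r //.
Qed.

Lemma exists_big (j n : nat) (k : 'I_j.+1 -> nat) :
  [forall t, (k t < n)%N]%:R - (k ord0 < n)%:R != 0 :> C -> exists u, (n <= k u)%N.
Proof.
case: (boolP [forall t, (k t < n)%N]) => [/forallP h|].
  by rewrite h subrr eqxx.
by rewrite negb_forall => /existsP [u hu] _; exists u; rewrite leqNgt.
Qed.

Lemma sum_bl b J (l : 'I_J -> nat) : (\sum_(t < J) b * l t)%N = (b * \sum_(t < J) l t)%N.
Proof. by rewrite big_distrr. Qed.

Lemma L_S5 b (B : nat -> nat -> C) K q p n N j (l : 'I_j.+1 -> nat) m (F : 'M[C]_q.+1) :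
  banded b B -> (p + q = K)%N -> (p + N = n)%N -> (b * m <= N)%N -> (\sum_(t < j.+1) l t)%N = m ->
  (forall a c : 'I_q.+1, F a c = Gm B K (inord (p + a)%N) (inord (p + c)%N)) ->
  \sum_(k : {ffun 'I_j.+1 -> 'I_K.+1})
     ([forall t, (k t < n)%N]%:R - (k ord0 < n)%:R) * Wt (Gm B K) l k
  = \sum_(y : {ffun 'I_j.+1 -> 'I_q.+1})
     ([forall t, (y t < N)%N]%:R - (y ord0 < N)%:R) * Wt F l y.
Proof.
move=> hB hK hn hbm hm hFG.
have hG : bandM b (Gm B K) := band_G hB.
have hF : bandM b F.
  move=> a c hac; rewrite hFG hG // !inordK; try (have := ltn_ord a; have := ltn_ord c; lia).
have hsum : (\sum_(t < j.+1) b * l t)%N = (b * m)%N by rewrite sum_bl hm.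
have hKle : (p + q <= K)%N by rewrite hK.
rewrite (reindex_shift (p := p) (q := q) hKle); last first.
  move=> k; rewrite mulf_eq0 negb_or => /andP [hD hW] t.
  have [u hu] := exists_big hD.
  have hgood : forall t, (k t <= k (ordS t) + b * l t)%N /\ (k (ordS t) <= k t + b * l t)%N.
    move=> t'; apply: A1; apply/negP => hbad.
    by move: hW; rewrite (Wt_zero hG hbad) eqxx.
  have hc := chain hgood u (ord_pred t).
  rewrite ord_predK hsum in hc.
  split; first exact: A2 hu hc hbm hn.
  exact: A6 (ltn_ord (k t)) hK.
apply: eq_bigr => y _.
have eD : [forall t, ([ffun t => (inord (p + y t)%N : 'I_K.+1)] t < n)%N]%:R
            - ([ffun t => (inord (p + y t)%N : 'I_K.+1)] ord0 < n)%:R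
          = [forall t, (y t < N)%N]%:R - (y ord0 < N)%:R :> C.
  have e : forall t, (([ffun t => (inord (p + y t)%N : 'I_K.+1)] t) < n)%N = (y t < N)%N.
    move=> t; rewrite ffunE inordK; first exact: A5.
    exact: A7 (ltn_ord (y t)) hK.
  have e1 : [forall t, ([ffun t => (inord (p + y t)%N : 'I_K.+1)] t < n)%N] = [forall t, (y t < N)%N].
    by apply: eq_forallb => t; exact: e t.
  by rewrite e1 e.
rewrite eD.
case: (eqVneq ([forall t, (y t < N)%N]%:R - (y ord0 < N)%:R) (0 : C)) => [->|hD].
  by rewrite !mul0r.
congr (_ * _).
have [u hu] := exists_big hD.
case: (boolP [exists t, (b * l t < y t - y (ordS t))%N || (b * l t < y (ordS t) - y t)%N]).
  case/existsP => t ht.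
  rewrite (Wt_zero hF ht); apply: (Wt_zero hG (t := t)).
  rewrite !ffunE !inordK; first exact: A4.
    exact: A7 (ltn_ord _) hK.
  exact: A7 (ltn_ord _) hK.
rewrite negb_exists => /forallP hgood.
have hgood' : forall t, (y t <= y (ordS t) + b * l t)%N /\ (y (ordS t) <= y t + b * l t)%N.
  by move=> t; apply: A1; apply: hgood.
rewrite /Wt; apply: eq_bigr => t _; rewrite !ffunE.
symmetry; apply: (window hK hG hFG).
have hc := chain hgood' u t.
rewrite hsum in hc.
exact: A3 hc hu hbm.
Qed.

End Main2.
Section Final.
Variable R : realType.
Local Notation C := R[i].

Lemma Pminus_Pc N : Pminus R N = Pc C (2 * N).+1 N.
Proof. by []. Qed.

Definition FnM (B : nat -> nat -> C) (n N : nat) : 'M[C]_((2 * N).+1) :=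
  truncZ (fun r s => extZ B (n%:Z + r) (n%:Z + s)) N.

Lemma FnM_G (B : nat -> nat -> C) n N (a c : 'I_(2 * N).+1) :
  (N <= n)%N ->
  FnM B n N a c = Gm B (n + N) (inord (n - N + a)%N) (inord (n - N + c)%N).
Proof.
move=> hN; rewrite /FnM /truncZ /Gm !mxE /extZ.
have ha := ltn_ord a; have hc := ltn_ord c.
have e1 : n%:Z + (a%:Z - N%:Z) = ((n - N + a)%N)%:Z by lia.
have e2 : n%:Z + (c%:Z - N%:Z) = ((n - N + c)%N)%:Z by lia.
rewrite e1 e2 /= !inordK //; lia.
Qed.

Lemma L_main b (B : nat -> nat -> C) M m n j (l : 'I_j.+1 -> nat) :
  banded b B -> (m <= M)%N -> (b * M < n)%N -> (\sum_(t < j.+1) l t)%N = m ->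
  trBP b n B l - trBmP b n B m =
  \tr (\prod_(t < j.+1) (Pminus R (b * M) * FnM B n (b * M) ^+ l t * Pminus R (b * M)))
  - \tr (Pminus R (b * M) * FnM B n (b * M) ^+ m * Pminus R (b * M)).
Proof.
move=> hB hmM hn hm.
set N := (b * M)%N.
have hbm : (b * m <= N)%N by rewrite leq_mul2l hmM orbT.
case: n hn => [|n'] hn; first by [].
have hK : (n'.+1 + b * m <= (n'.+1 + N).+1)%N by lia.
rewrite (L_S1 (K := (n'.+1 + N)%N) hB hm hK) (L_S2 (K := (n'.+1 + N)%N) hB); last by lia.
rewrite (tr_PA _ _ (esym hm)) -sumrB.
rewrite !Pminus_Pc (tr_PAP _ _ _) (tr_PA _ _ (esym hm)) -sumrB.
have e : forall (x y : C) w, x * w - y * w = (x - y) * w by move=> x y w; rewrite mulrBl.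
under eq_bigr do rewrite e.
under [in RHS]eq_bigr do rewrite e.
apply: (L_S5 (p := (n'.+1 - N)%N) (q := (2 * N)%N) hB _ _ hbm hm).
- by lia.
- by lia.
- by move=> a c; apply: FnM_G; lia.
Qed.

End Final.
Section Final2.
Variable R : realType.
Local Notation C := R[i].

Lemma Cmn_Dm b (B : nat -> nat -> C) M m n :
  banded b B -> (1 <= m)%N -> (m <= M)%N -> (b * M < n)%N ->
  Cmn b m n B = Dm m (FnM B n (b * M)).
Proof.
move=> hB hm1 hmM hn.
rewrite /Cmn /Dm; cbv zeta.
rewrite (big_ltn (m := 1%N)) ?ltnS //.
rewrite [X in _ = _ * X + _]big1 ?mulr0 ?add0r; last first.
  move=> l /andP [_ /eqP hl].
  rewrite big_ord1.
  rewrite big_ord1 in hl.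
  by rewrite hl subrr raddf0 mul0r.
apply: eq_big_nat => j /andP [hj1 hj2].
case: j hj1 hj2 => [|j] // hj1 hj2.
congr (_ * _); apply: eq_bigr => l /andP [_ /eqP hl].
congr (_ / _).
by rewrite (L_main (l := fun t => nat_of_ord (l t)) hB hmM hn hl) raddfB.
Qed.

Lemma cvg_Dm N m (Fs : nat -> 'M[C]_((2 * N).+1)) F :
  cvgM Fs F -> cvgK (fun j => Dm m (Fs j)) (Dm m F).
Proof.
move=> hF; rewrite /Dm; cbv zeta.
apply: cvgK_sum => i _.
apply: cvgK_mul; first exact: cvgK_cst.
apply: cvgK_sum => l _.
apply: cvgK_mul; last exact: cvgK_cst.
apply: cvgK_tr; apply: cvgM_sub.
  apply: cvgM_prod => t _.
  apply: cvgM_mulr; last exact: cvgM_cst.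
  apply: cvgM_mulr; first exact: cvgM_cst.
  exact: cvgM_exp.
apply: cvgM_mulr; last exact: cvgM_cst.
apply: cvgM_mulr; first exact: cvgM_cst.
exact: cvgM_exp.
Qed.

End Final2.

Theorem lemma4p3 (R : realType) (Bs : nat -> nat -> nat -> R[i]) (b : nat)
  (hband : forall n : nat, banded b (Bs n))
  (nj : nat -> nat) (hnj : forall j : nat, (nj j < nj j.+1)%N)
  (BR : int -> int -> R[i]) (hR : right_limit Bs nj BR)
  (M : nat) :
  forall m : nat, (1 <= m <= M)%N ->
    cvgC (fun j => Cmn b m (nj j) (Bs (nj j))) (Dm m (truncZ BR (b * M))).
Proof.
move=> m /andP [hm1 hmM].
have hge : forall j, (j <= nj j)%N.
  elim => // j IH; exact: leq_ltn_trans IH (hnj j).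
have hc : cvgK (fun j => Dm m (FnM (Bs (nj j)) (nj j) (b * M))) (Dm m (truncZ BR (b * M))).
  apply: cvg_Dm => a c.
  have h := (proj1 hR) (a%:Z - (b * M)%:Z) (c%:Z - (b * M)%:Z).
  rewrite [X in cvgK _ X]mxE.
  apply: (cvgK_ext _ _ _ _ h).
  by move=> j; rewrite /FnM /truncZ !mxE.
apply: (cvgK_eventually hc (J0 := (b * M).+1)) => j hj.
symmetry; apply: Cmn_Dm => //.
exact: leq_trans hj (hge j).
Qed.
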